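(* For all integers $d\geq 2$ and $\Delta\geq 2$, there exists a connected bipartite graph $G$ with $\mathrm{diam}(G)=d$ and $\Delta(G)=\Delta$ such that $G$ admits an interval edge coloring (i.e. $G\in\mathfrak{N}$) and $W(G)=d(\Delta-1)+1$.
   Context: All graphs are finite, undirected, without loops or multiple edges. $\Delta(G)$ denotes the maximum degree of $G$ and $\mathrm{diam}(G)$ its diameter. For a positive integer $t$, an interval $t$-coloring of a graph $G$ is a map assigning to each edge of $G$ a color from $\{1,2,\ldots,t\}$ such that every color $i\in\{1,\ldots,t\}$ is used on at least one edge, edges sharing a vertex receive distinct colors, and for each vertex $v$ the set of colors of edges incident to $v$ is an interval of consecutive integers. $\mathfrak{N}$ denotes the set of graphs that admit an interval $t$-coloring for some $t$, and for $G\in\mathfrak{N}$, $W(G)$ denotes the greatest $t$ for which $G$ has an interval $t$-coloring. *)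

(* Defs.v *)
From mathcomp Require Import all_boot.
Set Implicit Arguments. Unset Strict Implicit. Unset Printing Implicit Defensive.

Definition simple_graph (T : finType) (e : rel T) : Prop :=
  symmetric e /\ irreflexive e.

Definition walk_len (T : finType) (e : rel T) (x y : T) (n : nat) : Prop :=
  exists p : seq T, [/\ size p = n, path e x p & last x p = y].

Definition is_dist (T : finType) (e : rel T) (x y : T) (k : nat) : Prop :=
  walk_len e x y k /\ forall n, walk_len e x y n -> k <= n.

Definition connected_graph (T : finType) (e : rel T) : Prop :=
  forall x y : T, exists n, walk_len e x y n.

Definition diam_is (T : finType) (e : rel T) (d : nat) : Prop :=
  (forall x y : T, exists k, k <= d /\ is_dist e x y k) /\
  (exists x y : T, is_dist e x y d).

Definition bipartite (T : finType) (e : rel T) : Prop :=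
  exists f : T -> bool, forall x y, e x y -> f x != f y.

Definition degree (T : finType) (e : rel T) (v : T) : nat := #|[set u | e v u]|.

Definition max_degree (T : finType) (e : rel T) : nat := \max_(v : T) degree e v.

Definition interval_coloring (T : finType) (e : rel T) (t : nat)
  (c : T -> T -> nat) : Prop :=
  [/\ 0 < t,
      (forall x y, e x y -> c x y = c y x),
      (forall x y, e x y -> 1 <= c x y <= t),
      (forall i, 1 <= i <= t -> exists x y, e x y /\ c x y = i) &
      (forall x y z, e x y -> e x z -> y != z -> c x y != c x z)] /\
      (forall v a b k, (exists u, e v u /\ c v u = a) ->
                       (exists u, e v u /\ c v u = b) -> a <= k <= b ->
                       exists u, e v u /\ c v u = k).

Definition has_interval_coloring (T : finType) (e : rel T) (t : nat) : Prop :=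
  exists c, interval_coloring e t c.

Definition in_N (T : finType) (e : rel T) : Prop :=
  exists t, has_interval_coloring e t.

Definition W_is (T : finType) (e : rel T) (w : nat) : Prop :=
  has_interval_coloring e w /\ forall t, has_interval_coloring e t -> t <= w.

(* Main.v *)
Require Import Defs.
From mathcomp Require Import all_boot zify.
From Stdlib Require Import Classical.
Set Implicit Arguments. Unset Strict Implicit. Unset Printing Implicit Defensive.

Lemma card_ge (T : finType) (S : {set T}) (g : T -> nat) lo len :
  (forall k, lo <= k < lo + len -> exists x, x \in S /\ g x = k) -> len <= #|S|.
Proof.
move=> H; rewrite cardE -(size_map g) -{1}(size_iota lo len).
apply: uniq_leq_size; first exact: iota_uniq.
move=> k; rewrite mem_iota => /H [x [xS <-]].
by apply: map_f; rewrite mem_enum.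
Qed.

Lemma card_le (T : finType) (S : {set T}) (g : T -> nat) lo len :
  {in S &, injective g} -> (forall x, x \in S -> lo <= g x < lo + len) -> #|S| <= len.
Proof.
move=> Hi Hr; rewrite cardE -(size_map g) -(size_iota lo len).
apply: uniq_leq_size.
  rewrite map_inj_in_uniq ?enum_uniq //.
  by move=> x y; rewrite !mem_enum; apply: Hi.
move=> k /mapP [x]; rewrite mem_enum => /Hr + ->.
by rewrite mem_iota.
Qed.

Lemma walk_cons (T : finType) (e : rel T) x y z n :
  e x y -> walk_len e y z n -> walk_len e x z n.+1.
Proof. by move=> exy [p [sp pp lp]]; exists (y :: p); rewrite /= exy sp pp lp. Qed.

Lemma walk_snoc (T : finType) (e : rel T) x y z n :
  walk_len e x y n -> e y z -> walk_len e x z n.+1.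
Proof.
move=> [p [sp pp lp]] eyz; exists (rcons p z).
by rewrite size_rcons rcons_path last_rcons pp lp eyz sp.
Qed.

Lemma exists_dist (T : finType) (e : rel T) x y n :
  walk_len e x y n -> exists k, k <= n /\ is_dist e x y k.
Proof.
suff H : forall N n, n <= N -> walk_len e x y n -> exists k, k <= n /\ is_dist e x y k.
  exact: (H n n (leqnn n)).
elim=> [|N IH] {}n hn hw.
  move: hn hw; rewrite leqn0 => /eqP -> hw; exists 0; split=> //; split=> //.
destruct (classic (exists m, m < n /\ walk_len e x y m)) as [[m [hm hw']] | hno].
  have hmN : m <= N by rewrite -ltnS (leq_trans hm hn).
  have [k [hk hd]] := IH m hmN hw'.
  by exists k; split=> //; apply: leq_trans hk (ltnW hm).
exists n; split=> //; split=> // m hm.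
case: (leqP n m) => // hlt; exfalso; apply: hno; exists m; split=> //.
Qed.

Lemma vertex_spread (T : finType) (e : rel T) t c D v x y :
  interval_coloring e t c -> degree e v <= D -> e v x -> e v y ->
  c v x <= c v y + (D - 1).
Proof.
move=> [_ Hint] hdeg hx hy.
rewrite leqNgt; apply/negP => hlt.
have H : c v x - c v y + 1 <= degree e v.
  apply: (@card_ge _ _ (c v) (c v y)) => k hk.
  have [u [hu hc]] : exists u, e v u /\ c v u = k.
    apply: (Hint v (c v y) (c v x) k); [by exists y | by exists x | lia].
  by exists u; rewrite inE hu hc.
lia.
Qed.

Lemma chain_bound (T : finType) (e : rel T) t c D :
  symmetric e -> interval_coloring e t c -> (forall v, degree e v <= D) ->
  forall p x y z, path e x p -> e x y -> e (last x p) z ->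
  c (last x p) z <= c x y + (size p).+1 * (D - 1).
Proof.
move=> Hs Hc Hd; elim=> [|x1 p IH] x y z /=.
  by move=> _ hy hz; rewrite mul1n; apply: (vertex_spread Hc (Hd x)).
move=> /andP [hx1 hp] hy hz.
have h1 := vertex_spread Hc (Hd x) hx1 hy.
have [[_ Hsym _ _ _] _] := Hc.
have ex1 : e x1 x by rewrite Hs.
have h2 := IH x1 x z hp ex1 hz.
rewrite (Hsym _ _ hx1) in h1.
rewrite mulSn.
set k := (size p).+1 * (D - 1) in h2 *.
lia.
Qed.

Lemma parity_walk (T : finType) (e : rel T) (f : T -> bool) :
  (forall x y, e x y -> f x != f y) ->
  forall p x, path e x p -> f (last x p) = f x (+) odd (size p).
Proof.
move=> Hf; elim=> [|y p IH] x /=; first by rewrite addbF.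
move=> /andP [hxy hp]; rewrite (IH y hp).
have := Hf _ _ hxy; case: (f x); case: (f y) => //= _; by case: (odd (size p)).
Qed.

Lemma W_bound (T : finType) (e : rel T) t c D m :
  symmetric e -> interval_coloring e t c -> (forall v, degree e v <= D) -> bipartite e ->
  (forall x y, exists k, k <= m /\ walk_len e x y k) -> t <= m * (D - 1) + 1.
Proof.
move=> Hs Hc Hd [f Hf] Hw.
have [[ht Hsym Hr Hall Hdist] Hint] := Hc.
have [u1 [v1 [e1 c1]]] := Hall 1 (ht : 1 <= 1 <= t).
have [u2 [v2 [e2 c2]]] : exists x y, e x y /\ c x y = t by apply: Hall; rewrite ht leqnn.
have [a [ha [p1 [sp1 pp1 lp1]]]] := Hw u1 u2.
have [b [hb [p2 [sp2 pp2 lp2]]]] := Hw u1 v2.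
have P1 := parity_walk Hf pp1; rewrite lp1 sp1 in P1.
have P2 := parity_walk Hf pp2; rewrite lp2 sp2 in P2.
have hab : a != b.
  apply/negP => /eqP hab; move: (Hf _ _ e2); rewrite P1 P2 hab eqxx //.
have [hlt|hlt] : a < m \/ b < m by lia.
  have := chain_bound Hs Hc Hd pp1 e1 (_ : e (last u1 p1) v2).
  rewrite lp1 c1 c2 sp1 => /(_ e2) H.
  have : a.+1 * (D - 1) <= m * (D - 1) by apply: leq_mul.
  lia.
have e2' : e v2 u2 by rewrite Hs.
have := chain_bound Hs Hc Hd pp2 e1 (_ : e (last u1 p2) u2).
rewrite lp2 c1 -(Hsym _ _ e2) c2 sp2 => /(_ e2') H.
have : b.+1 * (D - 1) <= m * (D - 1) by apply: leq_mul.
lia.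
Qed.

Unset Implicit Arguments.
Definition Pr (s M k l : nat) : bool :=
  [&& k <= l + s, l <= k + s & [|| k + l <= s, M + M <= k + l + s | ~~ odd (k + l + s)]].
Definition colf (s M k l : nat) : nat :=
  if k + l <= s then k + l + 1 else if M + M <= k + l + s then k + l + s + 1 - M
  else (k + l + s + 2) %/ 2.

Lemma col_range s M k l : 1 <= s -> s <= M -> k <= M -> l <= M -> Pr s M k l ->
  k + 1 <= colf s M k l <= k + s + 1.
Proof.
rewrite /Pr /colf => h1 h2 hk hl /and3P[h3 h4 h5].
case: ifP => H1; first lia.
case: ifP => H2; first lia.
move: h5; rewrite H1 H2 /= => h5. lia.
Qed.

Lemma col_inj s M k l l' : 1 <= s -> s <= M -> k <= M -> l <= M -> l' <= M ->
  Pr s M k l -> Pr s M k l' -> colf s M k l = colf s M k l' -> l = l'.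
Proof.
rewrite /Pr /colf => h1 h2 hk hl hl' /and3P[h3 h4 h5] /and3P[h3' h4' h5'].
case: ifP => H1; case: ifP => H2; try case: ifP => H3; try case: ifP => H4; try lia;
move: h5 h5'; rewrite ?H1 ?H2 ?H3 ?H4 /=; lia.
Qed.

Lemma col_surj s M k c : 1 <= s -> s <= M -> k <= M -> k + 1 <= c <= k + s + 1 ->
  exists l, [/\ l <= M, Pr s M k l & colf s M k l = c].
Proof.
move=> h1 h2 hk hc.
exists ((c - 1 - s) + minn M (c - 1) - k).
rewrite /Pr /colf.
case: ifP => H1; [|case: ifP => H2]; split; lia.
Qed.

Lemma Pr_sym s M k l : Pr s M k l = Pr s M l k.
Proof. by apply/idP/idP; rewrite /Pr; lia. Qed.

Lemma colf_sym s M k l : colf s M k l = colf s M l k.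
Proof. by rewrite /colf addnC. Qed.

Definition idx (M u : nat) : nat := if u < M.+1 then u else u - M.+1.
Definition Egr (s M u v : nat) : bool :=
  ((u < M.+1) != (v < M.+1)) && Pr s M (idx M u) (idx M v).
Definition ge (s M : nat) : rel 'I_(M + M).+2 := fun u v => Egr s M u v.
Definition cg (s M : nat) (u v : 'I_(M + M).+2) : nat := colf s M (idx M u) (idx M v).
Definition V (M : nat) (b : bool) (i : nat) : 'I_(M + M).+2 :=
  inord (if b then i else M.+1 + i).

Lemma V_val M b i : i <= M -> (V M b i : nat) = if b then i else M.+1 + i.
Proof. by move=> hi; rewrite /V inordK //; case: b; lia. Qed.

Lemma V_side M b i : i <= M -> (V M b i < M.+1) = b.
Proof. by move=> hi; rewrite V_val //; case: b; lia. Qed.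

Lemma V_idx M b i : i <= M -> idx M (V M b i) = i.
Proof. by move=> hi; rewrite /idx V_val //; case: b; case: ifP; lia. Qed.

Lemma idx_le M (u : 'I_(M + M).+2) : idx M u <= M.
Proof. by rewrite /idx; case: ifP; have := ltn_ord u; lia. Qed.

Lemma vE M (u : 'I_(M + M).+2) : u = V M (u < M.+1) (idx M u).
Proof.
apply: val_inj; rewrite /= V_val ?idx_le // /idx.
by have := ltn_ord u; case: (ltnP u M.+1) => h /=; lia.
Qed.

Lemma ge_V s M b b' x y : x <= M -> y <= M ->
  ge s M (V M b x) (V M b' y) = (b != b') && Pr s M x y.
Proof. by move=> hx hy; rewrite /ge /Egr !V_side // !V_idx. Qed.

Lemma ge_sym s M : symmetric (ge s M).
Proof. by move=> u v; rewrite /ge /Egr eq_sym Pr_sym. Qed.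

Lemma ge_irr s M : irreflexive (ge s M).
Proof. by move=> u; rewrite /ge /Egr eqxx. Qed.

Lemma ge_Pr s M (u v : 'I_(M + M).+2) : ge s M u v -> Pr s M (idx M u) (idx M v).
Proof. by move/andP=> []. Qed.

Lemma cg_range s M (u v : 'I_(M + M).+2) : 1 <= s -> s <= M -> ge s M u v ->
  idx M u + 1 <= cg s M u v <= idx M u + s + 1.
Proof. by move=> h1 h2 /ge_Pr; apply: col_range; rewrite ?idx_le. Qed.

Lemma cg_inj s M (u v w : 'I_(M + M).+2) : 1 <= s -> s <= M -> ge s M u v -> ge s M u w ->
  cg s M u v = cg s M u w -> v = w.
Proof.
move=> h1 h2 huv huw hc.
have hi : idx M v = idx M w.
  by apply: (col_inj s M (idx M u)); rewrite ?idx_le //; apply: ge_Pr.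
have hs : (v < M.+1) = (w < M.+1).
  move: huv huw; rewrite /ge /Egr => /andP [+ _] /andP [+ _].
  by case: (u < M.+1); case: (v < M.+1); case: (w < M.+1).
by rewrite (vE M v) (vE M w) hi hs.
Qed.

Lemma cg_surj s M (u : 'I_(M + M).+2) c : 1 <= s -> s <= M ->
  idx M u + 1 <= c <= idx M u + s + 1 -> exists v, ge s M u v /\ cg s M u v = c.
Proof.
move=> h1 h2 hc.
have [l [hl hP hcol]] := col_surj s M (idx M u) c h1 h2 (idx_le M u) hc.
exists (V M (~~ (u < M.+1)) l).
rewrite {1}(vE M u) ge_V ?idx_le // /cg V_idx //.
by rewrite hcol hP; case: (u < M.+1).
Qed.

Lemma deg_eq s M (u : 'I_(M + M).+2) : 1 <= s -> s <= M -> degree (ge s M) u = s.+1.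
Proof.
move=> h1 h2; apply/eqP; rewrite eqn_leq; apply/andP; split.
  apply: (@card_le _ _ (cg s M u) (idx M u + 1)).
    by move=> v w; rewrite !inE => hv hw; apply: (cg_inj s M u).
  by move=> v; rewrite inE => /(cg_range s M u v h1 h2); lia.
apply: (@card_ge _ _ (cg s M u) (idx M u + 1)) => k hk.
have hk' : idx M u + 1 <= k <= idx M u + s + 1 by lia.
have [v [hv hc]] := cg_surj s M u k h1 h2 hk'.
by exists v; rewrite inE hv hc.
Qed.

Lemma cg_coloring s M : 1 <= s -> s <= M -> interval_coloring (ge s M) (M + s + 1) (cg s M).
Proof.
move=> h1 h2; split; first split.
- by rewrite addn1.
- by move=> x y _; rewrite /cg colf_sym.
- move=> x y hxy; have := cg_range s M x y h1 h2 hxy; have := idx_le M x; lia.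
- move=> i hi.
  pose k := minn (i - 1) M.
  have hk : k <= M by rewrite /k; lia.
  have hik : idx M (V M true k) + 1 <= i <= idx M (V M true k) + s + 1.
    by rewrite V_idx // /k; lia.
  have [v [hv hc]] := cg_surj s M (V M true k) i h1 h2 hik.
  by exists (V M true k), v.
- move=> x y z hy hz hyz; apply/negP => /eqP hc.
  by move/negP: hyz; apply; apply/eqP; apply: (cg_inj s M x).
- move=> v a b k [u1 [hu1 <-]] [u2 [hu2 <-]] hk.
  have := cg_range s M v u1 h1 h2 hu1; have := cg_range s M v u2 h1 h2 hu2 => r2 r1.
  apply: cg_surj => //; lia.
Qed.

Lemma edge_V s M b x y : x <= M -> y <= M -> Pr s M x y -> ge s M (V M b x) (V M (~~ b) y).
Proof. by move=> hx hy hP; rewrite ge_V // hP; case: b. Qed.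

Lemma low_walk s M : 1 <= s -> s <= M -> forall t, 0 < t -> forall b x y, x <= M -> y <= M ->
  x + y <= t * s -> walk_len (ge s M) (V M b x) (V M (b (+) odd t) y) t.
Proof.
move=> h1 h2; elim=> // t IH _ b x y hx hy.
rewrite mulSn => hxy.
case: (posnP t) => [t0|tpos].
  subst t; rewrite /= addbT.
  exists [:: V M (~~ b) y]; split=> //=.
  by rewrite andbT; apply: edge_V => //; rewrite /Pr; lia.
have hts : s <= t * s by rewrite leq_pmull.
set ts := t * s in hxy hts IH.
rewrite /= addbN.
case: (leqP s x) => hsx.
  apply: (walk_cons (y := V M (~~ b) (x - s))); first by apply: edge_V; rewrite /Pr; lia.
  rewrite -addNb; apply: IH => //; lia.
case: (leqP s y) => hsy.
  apply: (walk_snoc (y := V M (b (+) odd t) (y - s))); first by apply: IH => //; lia.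
  by apply: edge_V; rewrite /Pr; lia.
apply: (walk_cons (y := V M (~~ b) 0)); first by apply: edge_V; rewrite /Pr; lia.
rewrite -addNb; apply: IH => //; lia.
Qed.

Lemma high_walk s M : 1 <= s -> s <= M -> forall t, 0 < t -> forall b x y, x <= M -> y <= M ->
  (M - x) + (M - y) <= t * s -> walk_len (ge s M) (V M b x) (V M (b (+) odd t) y) t.
Proof.
move=> h1 h2; elim=> // t IH _ b x y hx hy.
rewrite mulSn => hxy.
case: (posnP t) => [t0|tpos].
  subst t; rewrite /= addbT.
  exists [:: V M (~~ b) y]; split=> //=.
  by rewrite andbT; apply: edge_V => //; rewrite /Pr; lia.
have hts : s <= t * s by rewrite leq_pmull.
set ts := t * s in hxy hts IH.
rewrite /= addbN.
case: (leqP (x + s) M) => hsx.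
  apply: (walk_cons (y := V M (~~ b) (x + s))); first by apply: edge_V; rewrite /Pr; lia.
  rewrite -addNb; apply: IH => //; lia.
case: (leqP (y + s) M) => hsy.
  apply: (walk_snoc (y := V M (b (+) odd t) (y + s))); first by apply: IH => //; lia.
  by apply: edge_V; rewrite /Pr; lia.
apply: (walk_cons (y := V M (~~ b) M)); first by apply: edge_V; rewrite /Pr; lia.
rewrite -addNb; apply: IH => //; lia.
Qed.

Lemma all_walks s d' : 1 <= s -> 1 <= d' -> forall u v : 'I_(d' * s + d' * s).+2,
  exists k, k <= d'.+1 /\ walk_len (ge s (d' * s)) u v k.
Proof.
move=> h1 hd u v.
set M := d' * s.
have h2 : s <= M by rewrite /M leq_pmull.
rewrite (vE M u) (vE M v).
set b := u < M.+1; set b' := v < M.+1.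
have hx := idx_le M u; have hy := idx_le M v.
set x := idx M u in hx *; set y := idx M v in hy *.
have [t0 [ht0 hbt hpos hM]] : exists t0, [/\ t0 <= d'.+1, b' = b (+) odd t0, 0 < t0 & M <= t0 * s].
  case E: (b (+) odd d' == b').
    by exists d'; split; rewrite ?(eqP E) //; lia.
  exists d'.+1; split=> //; last by rewrite /M leq_mul2r leqnSn orbT.
  by move/negbT: E; rewrite /= addbN; case: (b (+) odd d'); case: b'.
exists t0; split=> //; rewrite hbt.
case: (leqP (x + y) M) => hxy.
  by apply: low_walk => //; apply: leq_trans hxy hM.
by apply: high_walk => //; apply: leq_trans hM; lia.
Qed.

Theorem theorem6 (d D : nat) (hd : 2 <= d) (hD : 2 <= D) :
  exists (n : nat) (e : rel 'I_n),
    [/\ simple_graph e, connected_graph e, bipartite e,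
        diam_is e d & max_degree e = D] /\
    in_N e /\ W_is e (d * (D - 1) + 1).
Proof.
case: d hd => // d' hd; case: D hD => // s hD.
have h1 : 1 <= s by [].
have hd' : 1 <= d' by [].
rewrite subSS subn0.
set M := d' * s.
have h2 : s <= M by rewrite /M leq_pmull.
have hT : d'.+1 * s + 1 = M + s + 1 by rewrite mulSn /M; lia.
rewrite hT.
exists (M + M).+2, (ge s M).
have Hw := all_walks s d' h1 hd'.
have Hc := cg_coloring s M h1 h2.
have Hdeg : forall v, degree (ge s M) v <= s.+1 by move=> v; rewrite deg_eq.
have Hbip : bipartite (ge s M).
  by exists (fun u : 'I_(M + M).+2 => u < M.+1) => x y /andP [].
have Hsym := ge_sym s M.
have Hd1 : forall x y, exists k, k <= d'.+1 /\ is_dist (ge s M) x y k.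
  move=> x y; have [k [hk hw]] := Hw x y.
  have [k' [hk' hdist]] := exists_dist hw.
  by exists k'; split=> //; apply: leq_trans hk' hk.
split; last split.
- split.
  + by split; [apply: ge_sym | apply: ge_irr].
  + by move=> x y; have [k [_ hw]] := Hw x y; exists k.
  + exact: Hbip.
  + split=> //.
    apply: NNPP => hno.
    have Hw' : forall x y, exists k, k <= d' /\ walk_len (ge s M) x y k.
      move=> x y; have [k [hk [hw hmin]]] := Hd1 x y.
      exists k; split=> //.
      move: hk; rewrite leq_eqVlt => /orP [/eqP hk|] //.
      by exfalso; apply: hno; exists x, y; rewrite -hk.
    have := W_bound Hsym Hc Hdeg Hbip Hw'.
    rewrite subSS subn0 /M; lia.
  + apply/eqP; rewrite eqn_leq; apply/andP; split.
      by apply/bigmax_leqP => v _; rewrite deg_eq.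
    by rewrite -{1}(deg_eq s M (V M true 0)) //; apply: leq_bigmax.
- by exists (M + s + 1), (cg s M).
- split; first by exists (cg s M).
  move=> t [c Hc'].
  have := W_bound Hsym Hc' Hdeg Hbip Hw.
  by rewrite subSS subn0 mulSn /M; lia.
Qed.
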